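(* Let $\mathbf{A}$ be an algebra and let $e$ be an idempotent unary term of $\mathbf{A}$. Then $e$ separates $\mathbf{A}$ if and only if both of the following hold: (1) every isomorphism between subalgebras of $\mathbf{A}$ whose restriction to $e(A)$ is the identity map is the identity on its domain; and (2) every congruence on a subalgebra of $\mathbf{A}$ whose restriction to $e(A)$ is the equality relation is itself the equality relation.
   Context: A unary term $e$ of an algebra $\mathbf{A}$ is idempotent if $\mathbf{A}\models e(e(x))=e(x)$. The set $e(A)$ is then called a neighborhood of $\mathbf{A}$. We say $e$ separates $\mathbf{A}$ (is separating for $\mathbf{A}$) if for all $a\neq b$ in $A$ there is a unary term $g$ of $\mathbf{A}$ with $e(g(a))\neq e(g(b))$. *)

(* Defs.v *)
From mathcomp Require Import all_boot.
Set Implicit Arguments. Unset Strict Implicit. Unset Printing Implicit Defensive.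

Record algebra := Algebra {
  carrier :> Type;
  sym : Type;
  arity : sym -> nat;
  op : forall s : sym, ('I_(arity s) -> carrier) -> carrier
}.
Arguments op {a} s _.

Section Defs.
Variable A : algebra.

Inductive unary_term : (A -> A) -> Prop :=
| ut_var : unary_term (fun x => x)
| ut_op (s : sym A) (g : 'I_(arity s) -> (A -> A)) :
    (forall i, unary_term (g i)) ->
    unary_term (fun x => op s (fun i => g i x)).

Definition idempotent_term (e : A -> A) : Prop :=
  unary_term e /\ forall x, e (e x) = e x.

Definition nbhd (e : A -> A) (x : A) : Prop := exists a, x = e a.

Definition separates (e : A -> A) : Prop :=
  forall a b : A, a <> b -> exists g, unary_term g /\ e (g a) <> e (g b).

Definition subalgebra (B : A -> Prop) : Prop :=
  forall (s : sym A) (args : 'I_(arity s) -> A),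
    (forall i, B (args i)) -> B (op s args).

(* h : A -> A, restricted to B, is an isomorphism from the subalgebra B
   onto the subalgebra C *)
Definition sub_iso (B C : A -> Prop) (h : A -> A) : Prop :=
  [/\ forall x, B x -> C (h x),
      forall x y, B x -> B y -> h x = h y -> x = y,
      forall y, C y -> exists2 x, B x & h x = y &
      forall (s : sym A) (args : 'I_(arity s) -> A),
        (forall i, B (args i)) -> h (op s args) = op s (fun i => h (args i))].

Definition sub_congruence (B : A -> Prop) (theta : A -> A -> Prop) : Prop :=
  [/\ forall x y, theta x y -> B x /\ B y,
      forall x, B x -> theta x x,
      forall x y, theta x y -> theta y x,
      forall x y z, theta x y -> theta y z -> theta x z &
      forall (s : sym A) (a b : 'I_(arity s) -> A),
        (forall i, theta (a i) (b i)) -> theta (op s a) (op s b)].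

End Defs.

(* Main.v *)
Require Import Defs.
From Stdlib Require Import Classical ClassicalEpsilon FunctionalExtensionality Relations.
From mathcomp Require Import all_boot.
Set Implicit Arguments. Unset Strict Implicit.

Section S.
Variable A : algebra.

Lemma ut_comp (e t : A -> A) : unary_term e -> unary_term t -> unary_term (fun x => e (t x)).
Proof.
move=> He Ht; elim: He => [|s g _ IH] /=; first exact Ht.
by apply: ut_op => i; exact: IH.
Qed.

Definition gen (c : A) (x : A) := exists t, unary_term t /\ x = t c.

Lemma gen_choice c n (args : 'I_n -> A) : (forall i, gen c (args i)) ->
  exists r : 'I_n -> A -> A, forall i, unary_term (r i) /\ args i = r i c.
Proof.
move=> H.
exists (fun i => proj1_sig (constructive_indefinite_description _ (H i))) => i.
exact: proj2_sig (constructive_indefinite_description _ (H i)).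
Qed.

Lemma gen_sub c : subalgebra (gen c).
Proof.
move=> s args /gen_choice [r Hr].
exists (fun x => op s (fun i => r i x)); split.
  by apply: ut_op => i; exact: (proj1 (Hr i)).
by congr (op s); apply: functional_extensionality => i; exact: (proj2 (Hr i)).
Qed.

Lemma sub_ut (B : A -> Prop) x g : subalgebra B -> B x -> unary_term g -> B (g x).
Proof. move=> HB Bx; elim=> [|s h _ IH] //=; apply: (HB s (fun i => h i x)) => i; exact: IH. Qed.

Lemma iso_ut (B : A -> Prop) h x g : subalgebra B ->
  (forall s args, (forall i, B (args i)) -> h (op s args) = op s (fun i => h (args i))) ->
  B x -> unary_term g -> h (g x) = g (h x).
Proof.
move=> HB Hh Bx; elim=> [|s f Hf IH] //=.
rewrite Hh; last by move=> i; exact: (sub_ut HB Bx (Hf i)).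
by congr (op s); apply: functional_extensionality => i; exact: IH.
Qed.

Lemma cong_ut (theta : A -> A -> Prop) g x y :
  (forall s a b, (forall i, theta (a i) (b i)) -> theta (op s a) (op s b)) ->
  theta x y -> unary_term g -> theta (g x) (g y).
Proof. move=> Hc Hxy; elim=> [|s f _ IH] //=; apply: (Hc s (fun i => f i x) (fun i => f i y)) => i; exact: IH. Qed.

Section Back.
Variables (e : A -> A) (a b : A).
Hypothesis He : idempotent_term e.
Hypothesis Hab : forall g, unary_term g -> e (g a) = e (g b).

Definition rho (x y : A) := exists t t', unary_term t /\ unary_term t' /\
  x = t a /\ y = t' a /\ t b = t' b.
Definition rt := clos_refl_trans A rho.
Definition theta x y := gen a x /\ rt x y.

Lemma rho_gen x y : rho x y -> gen a x /\ gen a y.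
Proof. move=> [t [t' [ut [ut' [-> [-> _]]]]]]; split; [exists t | exists t']; by []. Qed.

Lemma rt_gen x y : rt x y -> gen a x -> gen a y.
Proof. elim=> // [u v /rho_gen [] //|u v w _ IH1 _ IH2 /IH1 /IH2] //. Qed.

Lemma rho_sym x y : rho x y -> rho y x.
Proof.
move=> [t [t' [ut [ut' [-> [-> E]]]]]]; exists t', t; do !split => //.
Qed.

Lemma rt_sym x y : rt x y -> rt y x.
Proof.
elim=> [u v /rho_sym H|u|u v w _ IH1 _ IH2].
- exact: rt_step.
- exact: rt_refl.
- exact: rt_trans IH2 IH1.
Qed.

Lemma rt_e x y : rt x y -> e x = e y.
Proof.
elim=> [u v [t [t' [ut [ut' [-> [-> E]]]]]]|u|u v w _ IH1 _ IH2] //.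
- by rewrite (Hab ut) (Hab ut') E.
- by rewrite IH1.
Qed.

Lemma lift s (k : 'I_(arity s)) u v : rt u v ->
  forall f g : 'I_(arity s) -> A, (forall j, j != k -> f j = g j) ->
  (forall j, j != k -> gen a (f j)) -> f k = u -> g k = v ->
  rt (op s f) (op s g).
Proof.
elim=> [u0 v0 Hr|u0|u0 w v0 _ IH1 _ IH2] f g Hfg Hgen Hfk Hgk.
- have [gu _] := rho_gen Hr.
  have := Hr => -[t [t' [ut [ut' [Eu [Ev E]]]]]].
  have /gen_choice [r Hr'] : forall j, gen a (if j == k then u0 else f j).
    by move=> j; case: eqP => [_|/eqP /Hgen] //.
  apply: rt_step.
  exists (fun x => op s (fun j => if j == k then t x else r j x)),
         (fun x => op s (fun j => if j == k then t' x else r j x)).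
  split; first by apply: ut_op => j; case: (j == k) => //; exact: (proj1 (Hr' j)).
  split; first by apply: ut_op => j; case: (j == k) => //; exact: (proj1 (Hr' j)).
  split.
    congr (op s); apply: functional_extensionality => j.
    case: eqP => [->|/eqP nk]; first by rewrite Hfk.
    by have := proj2 (Hr' j); rewrite (negbTE nk).
  split.
    congr (op s); apply: functional_extensionality => j.
    case: eqP => [->|/eqP nk]; first by rewrite Hgk.
    by have := proj2 (Hr' j); rewrite (negbTE nk) -(Hfg j nk).
  by congr (op s); apply: functional_extensionality => j; case: (j == k).
- have -> : f = g.
    apply: functional_extensionality => j.
    by case: (eqVneq j k) => [->|nk]; [rewrite Hfk Hgk | exact: Hfg].
  exact: rt_refl.
- set m := fun j => if j == k then w else f j.
  apply: (@rt_trans _ _ _ (op s m)).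
  + apply: IH1 => //; last by rewrite /m eqxx.
    by move=> j nk; rewrite /m (negbTE nk).
  + apply: IH2 => //; last by rewrite /m eqxx.
      by move=> j nk; rewrite /m (negbTE nk); exact: Hfg.
    by move=> j nk; rewrite /m (negbTE nk); exact: Hgen.
Qed.

Lemma theta_compat s (x y : 'I_(arity s) -> A) :
  (forall i, theta (x i) (y i)) -> theta (op s x) (op s y).
Proof.
move=> H; split; first by apply: gen_sub => i; exact: (proj1 (H i)).
have gy : forall i, gen a (y i) by move=> i; exact: rt_gen (proj2 (H i)) (proj1 (H i)).
suff: forall m, (m <= arity s)%N ->
  rt (op s x) (op s (fun j => if (j < m)%N then y j else x j)).
  move=> /(_ _ (leqnn _)).
  have -> // : (fun j : 'I_(arity s) => if (j < arity s)%N then y j else x j) = y.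
  by apply: functional_extensionality => j; rewrite ltn_ord.
elim=> [_|m IH Hm].
  have -> : (fun j : 'I_(arity s) => if (j < 0)%N then y j else x j) = x.
    by apply: functional_extensionality => j.
  exact: rt_refl.
apply: (rt_trans _ _ _ _ _ (IH (ltnW Hm))).
apply: (@lift s (Ordinal Hm) (x (Ordinal Hm)) (y (Ordinal Hm))) => /=.
- exact: (proj2 (H _)).
- move=> j nk.
  have jm : (j == m :> nat) = false.
    by apply/negbTE; apply: contra nk => /eqP E; apply/eqP; apply: val_inj.
  by rewrite [(j < m.+1)%N]ltnS (leq_eqVlt j m) jm.
- by move=> j _; case: ifP => _; [exact: gy | exact: (proj1 (H j))].
- by rewrite ltnn.
- by rewrite ltnS leqnn.
Qed.

Hypothesis H2 : forall (B : A -> Prop) (theta : A -> A -> Prop),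
       subalgebra B -> sub_congruence B theta ->
       (forall x y, nbhd e x -> nbhd e y -> theta x y -> x = y) ->
       forall x y, theta x y -> x = y.

Lemma Kab t t' : unary_term t -> unary_term t' -> t b = t' b -> t a = t' a.
Proof.
move=> ut ut' E.
apply: (H2 (@gen_sub a) (theta := theta)).
- split.
  + by move=> x y [gx r]; split => //; exact: rt_gen r gx.
  + by move=> x gx; split => //; exact: rt_refl.
  + by move=> x y [gx r]; split; [exact: rt_gen r gx | exact: rt_sym].
  + by move=> x y z [gx r1] [_ r2]; split => //; exact: rt_trans r2.
  + exact: theta_compat.
- move=> x y [x' ->] [y' ->] [_ /rt_e].
  by rewrite !(proj2 He).
- split; first by exists t.
  by apply: rt_step; exists t, t'.
Qed.

End Back.

End S.

Theorem lemma2p1 (A : algebra) (e : A -> A) :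
  idempotent_term e ->
  (separates e <->
   ((forall (B C : A -> Prop) (h : A -> A),
       subalgebra B -> subalgebra C -> sub_iso B C h ->
       (forall x, B x -> nbhd e x -> h x = x) ->
       forall x, B x -> h x = x) /\
    (forall (B : A -> Prop) (theta : A -> A -> Prop),
       subalgebra B -> sub_congruence B theta ->
       (forall x y, nbhd e x -> nbhd e y -> theta x y -> x = y) ->
       forall x y, theta x y -> x = y))).
Proof.
move=> He; split.
- move=> Hsep; split.
  + move=> B C h HB HC [HBC Hinj Hsurj Hhom] Hid x Bx.
    apply: NNPP => nx.
    have [g [ug Ng]] := Hsep _ _ nx.
    apply: Ng.
    have ueg := ut_comp (proj1 He) ug.
    have E := iso_ut HB Hhom Bx ueg; simpl in E.
    rewrite -E Hid //; [exact: (sub_ut HB Bx ueg) | by exists (g x)].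
  + move=> B th HB [Hb Hr Hs Ht Hc] Hid x y Hxy.
    apply: NNPP => nxy.
    have [g [ug Ng]] := Hsep _ _ nxy.
    apply: Ng; apply: Hid; [by exists (g x) | by exists (g y) |].
    exact: (cong_ut Hc Hxy (ut_comp (proj1 He) ug)).
- move=> [H1 H2] a b nab.
  apply: NNPP => Hn.
  have Hab : forall g, unary_term g -> e (g a) = e (g b).
    move=> g ug; apply: NNPP => N; apply: Hn; by exists g.
  have Hba : forall g, unary_term g -> e (g b) = e (g a).
    by move=> g ug; rewrite Hab.
  have K1 := Kab He Hab H2.
  have K2 := Kab He Hba H2.
  pose h x := epsilon (inhabits a) (fun y => exists t, unary_term t /\ x = t a /\ y = t b).
  have hE : forall t, unary_term t -> h (t a) = t b.
    move=> t ut.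
    have [t' [ut' [E1 E2]]] : exists t', unary_term t' /\ t a = t' a /\ h (t a) = t' b.
      by apply: (epsilon_spec (inhabits a) (fun y => exists t0, unary_term t0 /\ t a = t0 a /\ y = t0 b)); exists (t b), t.
    by rewrite E2; apply: K2.
  apply: nab.
  have hab : h a = b by exact: (hE _ (ut_var A)).
  rewrite -hab; symmetry.
  apply: (H1 (gen a) (gen b) h (@gen_sub _ a) (@gen_sub _ b)).
  + split.
    * by move=> x [t [ut ->]]; rewrite hE //; exists t.
    * move=> x y [t [ut ->]] [t' [ut' ->]]; rewrite !hE //; exact: K1.
    * by move=> y [t [ut ->]]; exists (t a); [exists t | rewrite hE].
    * move=> s args /gen_choice [r Hr].
      have -> : args = (fun i => r i a).
        by apply: functional_extensionality => i; exact: (proj2 (Hr i)).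
      have ur : unary_term (fun x => op s (fun i => r i x)).
        by apply: ut_op => i; exact: (proj1 (Hr i)).
      rewrite (hE _ ur); congr (op s); apply: functional_extensionality => i.
      by rewrite hE //; exact: (proj1 (Hr i)).
  + move=> x [t [ut ->]] [x' Ex].
    have Ex2 : t a = e (t a) by rewrite Ex (proj2 He).
    have ue := ut_comp (proj1 He) ut.
    rewrite Ex2 (hE _ ue) /=; symmetry; exact: Hab.
  + by exists (fun x => x); split => //; exact: ut_var.
Qed.
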